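(* Let $M=(m_{r,c})$ be the star matrix of a partition of the hypercube ${\bf Z}_q^n$ into subcubes all of the same dimension, let $i\ne j$ be two columns of $M$, and let $\pi$ be a permutation of ${\bf Z}_q$. Let $R$ be the set of all rows $r$ of $M$ such that both $m_{r,i}$ and $m_{r,j}$ belong to ${\bf Z}_q$. Then, as $r$ ranges over $R$, the value $(m_{r,i}+\pi(m_{r,j}))\bmod q$ takes each value of ${\bf Z}_q$ the same number of times.
   Context: A subcube of ${\bf Z}_q^n$ is obtained by fixing the values of some coordinates and letting the remaining coordinates run through all of ${\bf Z}_q$; its dimension is the number of free coordinates. Its star pattern is the vector of length $n$ over ${\bf Z}_q\cup\{*\}$ with the fixed value in each fixed coordinate and $*$ in each free coordinate. The star matrix of a partition of ${\bf Z}_q^n$ into subcubes (each vector lying in exactly one subcube) is the matrix whose rows are the star patterns of the subcubes of the partition. *)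

(* Defs.v *)
From mathcomp Require Import all_boot all_fingroup.
Set Implicit Arguments. Unset Strict Implicit. Unset Printing Implicit Defensive.

(* Z_q is modelled by 'I_q with addition modulo q.
   A star pattern of length n: a function 'I_n -> option 'I_q,
   where None stands for the star symbol *. *)
Definition star_row (n q : nat) := {ffun 'I_n -> option 'I_q}.

Definition in_subcube n q (r : star_row n q) (x : {ffun 'I_n -> 'I_q}) : bool :=
  [forall k, if r k is Some a then x k == a else true].

Definition subcube_dim n q (r : star_row n q) : nat := #|[set k | r k == None]|.

Definition is_partition_star_matrix n q (M : seq (star_row n q)) : Prop :=
  forall x : {ffun 'I_n -> 'I_q}, count (fun r => in_subcube r x) M = 1.

Definition equidimensional n q (M : seq (star_row n q)) : Prop :=
  exists d, all (fun r => subcube_dim r == d) M.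

Definition count_value n q (M : seq (star_row n q)) (i j : 'I_n)
  (pi : {perm 'I_q}) (v : 'I_q) : nat :=
  count (fun r : star_row n q => match r i, r j with
                  | Some a, Some b => (a + pi b) %% q == v
                  | _, _ => false
                  end) M.

(* Main.v *)
Require Import Defs.
From mathcomp Require Import all_boot all_fingroup.
Set Implicit Arguments. Unset Strict Implicit.

Lemma card_cube n q (r : star_row n q) :
  #|[set x | in_subcube r x]| = q ^ subcube_dim r.
Proof.
pose F := fun k : 'I_n => (if r k is Some a then pred1 a else predT) : pred 'I_q.
have -> : #|[set x | in_subcube r x]| = #|(family F : simpl_pred {ffun 'I_n -> 'I_q})|.
  apply: eq_card => x; rewrite inE; apply/forallP/familyP => H k;
  have := H k; rewrite /F; by case: (r k).
rewrite (card_family (rT := fun _ => 'I_q)) foldrE big_map big_enum /=.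
rewrite /subcube_dim -prod_nat_const [RHS]big_mkcond /=.
apply: eq_bigr => k _; rewrite /F inE; case: (r k) => [a|] /=.
  by rewrite card1.
by rewrite cardT size_enum_ord.
Qed.

Lemma inj_leq_card (T U : finType) (f : T -> U) (A : {set T}) (B : {set U}) :
  injective f -> (forall x, x \in A -> f x \in B) -> #|A| <= #|B|.
Proof.
move=> finj H; rewrite -(card_imset A finj); apply: subset_leq_card.
by apply/subsetP => y /imsetP [x xA ->]; apply: H.
Qed.

Section Main.
Variables (n q : nat) (i j : 'I_n) (pi : {perm 'I_q}).
Hypothesis qpos : 0 < q.
Hypothesis ij : i != j.

Definition cond (x : {ffun 'I_n -> 'I_q}) (v : 'I_q) := (x i + pi (x j)) %% q == v.
Definition C (r : star_row n q) v := #|[set x | cond x v && in_subcube r x]|.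

Definition shi (t : nat) (x : {ffun 'I_n -> 'I_q}) : {ffun 'I_n -> 'I_q} :=
  [ffun k => if k == i then Ordinal (ltn_pmod (x k + t) qpos) else x k].
Definition shj (t : nat) (x : {ffun 'I_n -> 'I_q}) : {ffun 'I_n -> 'I_q} :=
  [ffun k => if k == j then (pi^-1)%g (Ordinal (ltn_pmod (pi (x k) + t) qpos)) else x k].

Lemma shi_inj t : injective (shi t).
Proof.
move=> x y /ffunP H; apply/ffunP => k; have := H k; rewrite !ffunE.
case: eqP => // _ /(congr1 val) /= /eqP; rewrite eqn_modDr !modn_small //.
by move/eqP/val_inj.
Qed.

Lemma shj_inj t : injective (shj t).
Proof.
move=> x y /ffunP H; apply/ffunP => k; have := H k; rewrite !ffunE.
case: eqP => // _ /perm_inj /(congr1 val) /= /eqP; rewrite eqn_modDr !modn_small //.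
by move/eqP/val_inj/perm_inj.
Qed.

Lemma arith (a b : nat) (v w : 'I_q) : (a + b) %% q = v ->
  (a + b + (w + (q - v))) %% q = w.
Proof.
move=> H; rewrite -modnDml H addnCA subnKC ?(ltnW (ltn_ord v)) //.
by rewrite -modnDmr modnn addn0 modn_small.
Qed.

Lemma C_shi (r : star_row n q) v w : r i = None -> C r v <= C r w.
Proof.
move=> ri; apply: (@inj_leq_card _ _ (shi (w + (q - v)))); first exact: shi_inj.
move=> x; rewrite !inE /cond => /andP [/eqP c /forallP s]; apply/andP; split.
  have ji : (j == i) = false by rewrite eq_sym (negbTE ij).
  rewrite !ffunE eqxx ji /= modnDml.
  by rewrite addnAC arith.
apply/forallP => k; rewrite ffunE; case: eqP => [->|_]; first by rewrite ri.
exact: s.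
Qed.

Lemma C_shj (r : star_row n q) v w : r j = None -> C r v <= C r w.
Proof.
move=> rj; apply: (@inj_leq_card _ _ (shj (w + (q - v)))); first exact: shj_inj.
move=> x; rewrite !inE /cond => /andP [/eqP c /forallP s]; apply/andP; split.
  rewrite !ffunE eqxx (negbTE ij) permKV /= modnDmr.
  by rewrite addnA arith.
apply/forallP => k; rewrite ffunE; case: eqP => [->|_]; first by rewrite rj.
exact: s.
Qed.

Lemma C_fix (r : star_row n q) v a b : r i = Some a -> r j = Some b ->
  C r v = ((a + pi b) %% q == v) * q ^ subcube_dim r.
Proof.
move=> ra rb; rewrite -card_cube /C.
have -> : [set x | cond x v && in_subcube r x] =
          [set x | ((a + pi b) %% q == v) && in_subcube r x].
  apply/setP => x; rewrite !inE; case s: (in_subcube r x); rewrite ?andbF //.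
  move/forallP: s => s; have := s i; have := s j; rewrite ra rb /cond.
  by move=> /eqP -> /eqP ->.
case: eqP => _; rewrite ?mul1n ?mul0n.
  by apply: eq_card => x; rewrite !inE.
by apply/eqP; rewrite cards_eq0; apply/eqP/setP => x; rewrite !inE.
Qed.


Lemma decomp (M : seq (star_row n q)) v : is_partition_star_matrix M ->
  #|[set x | cond x v]| = \sum_(r <- M) C r v.
Proof.
move=> HM.
rewrite -sum1_card big_mkcond /=.
transitivity (\sum_x \sum_(r <- M) (if cond x v && in_subcube r x then 1 else 0)).
  apply: eq_bigr => x _; rewrite inE; case: (cond x v) => /=.
    by rewrite -big_mkcond sum1_count HM.
  by rewrite big1.
rewrite exchange_big /=; apply: eq_bigr => r _.
by rewrite /C -sum1_card [RHS]big_mkcond /=; apply: eq_bigr => x _; rewrite inE.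
Qed.

End Main.

Theorem lemma3 (q n : nat) (M : seq (star_row n q)) (i j : 'I_n)
  (pi : {perm 'I_q}) :
  is_partition_star_matrix M -> equidimensional M -> i != j ->
  forall v w : 'I_q, count_value M i j pi v = count_value M i j pi w.
Proof.
move=> HM [d Hd] ij v w.
have qpos : 0 < q := leq_ltn_trans (leq0n v) (ltn_ord v).
pose N (r : star_row n q) (v : 'I_q) := match r i, r j with Some _, Some _ => 0 | _, _ => C i j pi r v end.
pose pv (v : 'I_q) (r : star_row n q) := match r i, r j with
                  | Some a, Some b => (a + pi b) %% q == v
                  | _, _ => false end.
have row : forall v, {in M, forall r, C i j pi r v = pv v r * q ^ d + N r v}.
  move=> u r rM; rewrite /N /pv.
  have /eqP <- := allP Hd r rM.
  case ri: (r i) => [a|]; case rj: (r j) => [b|] //; rewrite ?addn0 //.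
  exact: C_fix.
have NN : {in M, forall r, N r v = N r w}.
  move=> r _; rewrite /N; apply/eqP; rewrite eqn_leq.
  case ri: (r i) => [a|]; case rj: (r j) => [b|] //.
  - by rewrite !(C_shj pi qpos ij).
  - by rewrite !(C_shi pi qpos ij).
  - by rewrite !(C_shi pi qpos ij).
have sumeq : forall u, \sum_(r <- M) C i j pi r u =
   count_value M i j pi u * q ^ d + \sum_(r <- M) N r u.
  move=> u; rewrite (eq_big_seq _ (row u)) big_split /=; congr (_ + _).
  rewrite /count_value; elim: M {HM Hd row NN} => [|r0 s IH]; first by rewrite big_nil.
  by rewrite big_cons IH /= mulnDl.
have r0 : forall u, #|[set x | cond i j pi x u]| = C i j pi [ffun _ => None] u.
  move=> u; apply: eq_card => x; rewrite !inE.
  have -> : in_subcube [ffun _ => None] x by apply/forallP => k; rewrite ffunE.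
  by rewrite andbT.
have Svw : #|[set x | cond i j pi x v]| = #|[set x | cond i j pi x w]|.
  by rewrite !r0; apply/eqP; rewrite eqn_leq !(C_shi pi qpos ij) // ffunE.
move: Svw; rewrite !(decomp i j pi _ HM) !sumeq (eq_big_seq _ NN).
by move/eqP; rewrite eqn_add2r eqn_pmul2r ?expn_gt0 ?qpos // => /eqP.
Qed.
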